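(* Let $G=G'\times H$ be a product of commutative groups with $H$ torsion-free, let $U\subset G'$ be finite (identified with $U\times\{0\}\subset G$), and let $\vartheta$ be any of the functionals $\alpha,\alpha',\alpha'',\beta',\beta''$. Then $\vartheta(U,G)=\vartheta(U,G')$.
   Context: $\vartheta(U,K)$ denotes the functional computed with $A,B$ ranging over nonempty finite subsets of the ambient group $K$: $\alpha(U,K)=\inf_{A\supset U,B\supset U}\frac{|A+B|}{\sqrt{|A||B|}}$; $\alpha'(U,K)=\inf_{A\supset U,B\supset U,|A|=|B|}\frac{|A+B|}{|A|}$; $\alpha''(U,K)=\inf_{A\supset U}\frac{|A+A|}{|A|}$; $\beta'(U,K)=\inf_{A,B,|A|=|B|}\frac{|A+B+U|}{\sqrt{|A||B|}}$; $\beta''(U,K)=\inf_A\frac{|A+A+U|}{|A|}$. *)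

(* Defs.v *)
From HB Require Import structures.
From mathcomp Require Import all_boot all_order all_algebra.
From mathcomp Require Import finmap.
From mathcomp Require Import boolp classical_sets reals.
Set Implicit Arguments. Unset Strict Implicit. Unset Printing Implicit Defensive.
Import Order.TTheory GRing.Theory Num.Theory.
Local Open Scope ring_scope.
Local Open Scope fset_scope.

Definition sumset (K : zmodType) (A B : {fset K}) : {fset K} :=
  [fset (a + b)%R | a in A, b in B].

Definition torsion_free (H : zmodType) : Prop :=
  forall (h : H) (n : nat), (0 < n)%N -> h *+ n = 0 -> h = 0.

Definition embed (G' H : zmodType) (U : {fset G'}) : {fset G' * H} :=
  [fset (u, (0 : H)) | u in U].

Section Functionals.
Variables (R : realType) (K : zmodType).
Local Notation card A := ((#|` A|)%:R : R).

Definition alpha (U : {fset K}) : R :=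
  inf [set r | exists A B : {fset K}, [/\ A != fset0, B != fset0,
        U `<=` A, U `<=` B &
        r = card (sumset A B) / Num.sqrt (card A * card B)]].

Definition alpha' (U : {fset K}) : R :=
  inf [set r | exists A B : {fset K}, [/\ A != fset0, B != fset0,
        (U `<=` A) && (U `<=` B), #|` A| = #|` B| &
        r = card (sumset A B) / card A]].

Definition alpha'' (U : {fset K}) : R :=
  inf [set r | exists A : {fset K}, [/\ A != fset0, U `<=` A &
        r = card (sumset A A) / card A]].

Definition beta' (U : {fset K}) : R :=
  inf [set r | exists A B : {fset K}, [/\ A != fset0, B != fset0,
        #|` A| = #|` B| &
        r = card (sumset (sumset A B) U) / Num.sqrt (card A * card B)]].

Definition beta'' (U : {fset K}) : R :=
  inf [set r | exists A : {fset K}, A != fset0 /\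
        r = card (sumset (sumset A A) U) / card A].
End Functionals.

(* Main.v *)
Require Import Defs.
From HB Require Import structures.
From mathcomp Require Import all_boot all_order all_algebra.
From mathcomp Require Import finmap.
From mathcomp Require Import boolp classical_sets reals.
Set Implicit Arguments. Unset Strict Implicit. Unset Printing Implicit Defensive.
Import Order.TTheory GRing.Theory Num.Theory.
Local Open Scope fset_scope.
Local Open Scope ring_scope.

Lemma inf_transfer (R : realType) (S1 S2 : set R) :
  (exists x, S1 x) -> (exists x, S2 x) ->
  (forall x, S1 x -> 0 <= x) -> (forall x, S2 x -> 0 <= x) ->
  (forall x, S1 x -> exists y, S2 y /\ y <= x) ->
  (forall y, S2 y -> exists x, S1 x /\ x <= y) -> inf S1 = inf S2.
Proof.
move=> n1 n2 p1 p2 h12 h21.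
have hl1 : has_lbound S1 by exists 0 => x /p1.
have hl2 : has_lbound S2 by exists 0 => x /p2.
apply/le_anti/andP; split.
- apply: lb_le_inf => // y /h21 [x [S1x xy]].
  exact: le_trans (ge_inf hl1 S1x) xy.
- apply: lb_le_inf => // x /h12 [y [S2y yx]].
  exact: le_trans (ge_inf hl2 S2y) yx.
Qed.

Lemma card_le_rel (K1 K2 : choiceType) (y0 : K2) (D : {fset K1}) (E : {fset K2})
  (P : K1 -> K2 -> Prop) :
  (forall x y y', P x y -> P x y' -> y = y') ->
  (forall y, y \in E -> exists2 x, x \in D & P x y) ->
  (#|` E| <= #|` D|)%N.
Proof.
move=> Pf PE.
pose g x := xget y0 (fun y => y \in E /\ P x y).
have sub : E `<=` g @` D.
  apply/fsubsetP => y yE; have [x xD Pxy] := PE y yE.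
  apply/imfsetP; exists x => //.
  have [_ ] : (fun y => y \in E /\ P x y) (g x) by apply: (xgetPex y0 (P:=fun y => y \in E /\ P x y)); exists y.
  by move/(Pf _ _ _ Pxy).
apply: leq_trans (fsubset_leq_card sub) _.
apply: leq_trans (leq_imfset_card _ _ _) _.
by [].
Qed.


Lemma sumsetP (K : zmodType) (A B : {fset K}) s :
  reflect (exists a b, [/\ a \in A, b \in B & s = a + b]) (s \in sumset A B).
Proof.
apply: (iffP (imfset2P _ _ _ _ _)) => [[a aA [b bB ->]]|[a [b [aA bB ->]]]].
  by exists a, b.
by exists a => //; exists b.
Qed.

Lemma sumset_in (K : zmodType) (A B : {fset K}) a b :
  a \in A -> b \in B -> a + b \in sumset A B.
Proof. by move=> aA bB; apply/sumsetP; exists a, b. Qed.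

Definition good (K1 K2 : zmodType) (phi : K1 -> K2) (X U1 : {fset K1})
  (U2 : {fset K2}) : Prop :=
  [/\ {in X &, injective phi},
   (forall x y z w, x \in X -> y \in X -> z \in X -> w \in X ->
      x + y = z + w -> phi x + phi y = phi z + phi w),
   (forall x y z w u v, x \in X -> y \in X -> z \in X -> w \in X ->
      u \in U1 -> v \in U1 ->
      x + y + u = z + w + v -> phi x + phi y + phi u = phi z + phi w + phi v)
 & [fset phi u | u in U1] = U2].

Section Good.
Variables (K1 K2 : zmodType) (phi : K1 -> K2) (X U1 : {fset K1}) (U2 : {fset K2}).
Hypothesis g : good phi X U1 U2.

Lemma good_card A : A `<=` X -> #|` [fset phi a | a in A]| = #|` A|.
Proof.
case: g => inj _ _ _ /fsubsetP sAX.
by rewrite card_in_imfset // => x y /sAX xX /sAX yX; apply: inj.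
Qed.

Lemma good_sum A B : A `<=` X -> B `<=` X ->
  (#|` sumset [fset phi a | a in A] [fset phi b | b in B]| <= #|` sumset A B|)%N.
Proof.
case: g => _ r2 _ _ /fsubsetP sAX /fsubsetP sBX.
apply: (@card_le_rel _ _ 0 _ _
  (fun s t => exists a b, [/\ a \in A, b \in B, s = a + b & t = phi a + phi b])).
  move=> s t t' [a [b [aA bB -> ->]]] [a' [b' [aA' bB' e ->]]].
  by apply: r2 e; [apply: sAX|apply: sBX|apply: sAX|apply: sBX].
move=> t /sumsetP [a' [b' [/imfsetP [a /= aA ->] /imfsetP [b /= bB ->] ->]]].
exists (a + b); first exact: sumset_in.
by exists a, b.
Qed.

Lemma good_sum3 A B : A `<=` X -> B `<=` X ->
  (#|` sumset (sumset [fset phi a | a in A] [fset phi b | b in B]) U2|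
     <= #|` sumset (sumset A B) U1|)%N.
Proof.
case: g => _ _ r3 eU /fsubsetP sAX /fsubsetP sBX.
apply: (@card_le_rel _ _ 0 _ _
  (fun s t => exists a b u, [/\ a \in A, b \in B, u \in U1, s = a + b + u &
     t = phi a + phi b + phi u])).
  move=> s t t' [a [b [u [aA bB uU -> ->]]]] [a' [b' [u' [aA' bB' uU' e ->]]]].
  by apply: r3 e; [apply: sAX|apply: sBX|apply: sAX|apply: sBX| |].
move=> t /sumsetP [ab [u' [/sumsetP [a' [b' [/imfsetP [a /= aA ->]
   /imfsetP [b /= bB ->] ->]]] uU ->]]].
move: uU; rewrite -eU => /imfsetP [u /= uU ->].
exists (a + b + u); first by apply: sumset_in => //; exact: sumset_in.
by exists a, b, u.
Qed.

Lemma good_U A : U1 `<=` A -> U2 `<=` [fset phi a | a in A].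
Proof.
case: g => _ _ _ <- /fsubsetP sUA; apply/fsubsetP => t /imfsetP [u /= uU ->].
by apply/imfsetP; exists u => //; apply: sUA.
Qed.

Lemma good_n0 A : A `<=` X -> A != fset0 -> [fset phi a | a in A] != fset0.
Proof. by move=> sAX; rewrite -!cardfs_gt0 good_card. Qed.

End Good.

Lemma ratio_le (R : realType) (m n : nat) (s : R) : (m <= n)%N -> 0 <= s ->
  m%:R / s <= n%:R / s.
Proof. by move=> mn s0; rewrite ler_wpM2r ?invr_ge0 // ler_nat. Qed.


Section Sets.
Variables (R : realType) (K : zmodType).
Local Notation card A := ((#|` A|)%:R : R).
Definition aS (U : {fset K}) : set R :=
  [set r | exists A B : {fset K}, [/\ A != fset0, B != fset0,
        U `<=` A, U `<=` B &
        r = card (sumset A B) / Num.sqrt (card A * card B)]].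
Definition a'S (U : {fset K}) : set R :=
  [set r | exists A B : {fset K}, [/\ A != fset0, B != fset0,
        (U `<=` A) && (U `<=` B), #|` A| = #|` B| &
        r = card (sumset A B) / card A]].
Definition a''S (U : {fset K}) : set R :=
  [set r | exists A : {fset K}, [/\ A != fset0, U `<=` A &
        r = card (sumset A A) / card A]].
Definition b'S (U : {fset K}) : set R :=
  [set r | exists A B : {fset K}, [/\ A != fset0, B != fset0,
        #|` A| = #|` B| &
        r = card (sumset (sumset A B) U) / Num.sqrt (card A * card B)]].
Definition b''S (U : {fset K}) : set R :=
  [set r | exists A : {fset K}, A != fset0 /\
        r = card (sumset (sumset A A) U) / card A].
Lemma alphaE U : alpha R U = inf (aS U). Proof. by []. Qed.
Lemma alpha'E U : alpha' R U = inf (a'S U). Proof. by []. Qed.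
Lemma alpha''E U : alpha'' R U = inf (a''S U). Proof. by []. Qed.
Lemma beta'E U : beta' R U = inf (b'S U). Proof. by []. Qed.
Lemma beta''E U : beta'' R U = inf (b''S U). Proof. by []. Qed.
End Sets.

Section Dir.
Variables (R : realType) (K1 K2 : zmodType) (U1 : {fset K1}) (U2 : {fset K2}).
Hypothesis hg : forall X : {fset K1}, exists phi, good phi X U1 U2.

Definition dirP (S1 : {fset K1} -> set R) (S2 : {fset K2} -> set R) :=
  forall r, S1 U1 r -> exists r', S2 U2 r' /\ r' <= r.

Lemma alpha_dir : dirP (@aS R K1) (@aS R K2).
Proof.
move=> r [A [B [nA nB sA sB ->]]].
have [phi g] := hg (A `|` B).
have sAX : A `<=` A `|` B by apply: fsubsetUl.
have sBX : B `<=` A `|` B by apply: fsubsetUr.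
exists ((#|` sumset [fset phi a | a in A] [fset phi b | b in B]|)%:R /
   Num.sqrt ((#|` [fset phi a | a in A]|)%:R * (#|` [fset phi b | b in B]|)%:R)).
split.
  exists [fset phi a | a in A], [fset phi b | b in B]; split => //.
  - exact: (good_n0 g sAX nA).
  - exact: (good_n0 g sBX nB).
  - exact: (good_U g _).
  - exact: (good_U g _).
rewrite (good_card g sAX) (good_card g sBX).
by apply: ratio_le; [exact: (good_sum g _ _)|exact: sqrtr_ge0].
Qed.

Lemma alpha'_dir : dirP (@a'S R K1) (@a'S R K2).
Proof.
move=> r [A [B [nA nB /andP[sA sB] cAB ->]]].
have [phi g] := hg (A `|` B).
have sAX : A `<=` A `|` B by apply: fsubsetUl.
have sBX : B `<=` A `|` B by apply: fsubsetUr.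
exists ((#|` sumset [fset phi a | a in A] [fset phi b | b in B]|)%:R /
   (#|` [fset phi a | a in A]|)%:R).
split.
  exists [fset phi a | a in A], [fset phi b | b in B]; split => //.
  - exact: (good_n0 g sAX nA).
  - exact: (good_n0 g sBX nB).
  - by rewrite (good_U g sA) (good_U g sB).
  - by rewrite (good_card g sAX) (good_card g sBX).
rewrite (good_card g sAX).
by apply: ratio_le; [exact: (good_sum g _ _)|exact: ler0n].
Qed.

Lemma alpha''_dir : dirP (@a''S R K1) (@a''S R K2).
Proof.
move=> r [A [nA sA ->]].
have [phi g] := hg A.
have sAX : A `<=` A by apply: fsubset_refl.
exists ((#|` sumset [fset phi a | a in A] [fset phi b | b in A]|)%:R /
   (#|` [fset phi a | a in A]|)%:R).
split.
  exists [fset phi a | a in A]; split => //.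
  - exact: (good_n0 g sAX nA).
  - exact: (good_U g _).
rewrite (good_card g sAX).
by apply: ratio_le; [exact: (good_sum g _ _)|exact: ler0n].
Qed.

Lemma beta'_dir : dirP (@b'S R K1) (@b'S R K2).
Proof.
move=> r [A [B [nA nB cAB ->]]].
have [phi g] := hg (A `|` B).
have sAX : A `<=` A `|` B by apply: fsubsetUl.
have sBX : B `<=` A `|` B by apply: fsubsetUr.
exists ((#|` sumset (sumset [fset phi a | a in A] [fset phi b | b in B]) U2|)%:R /
   Num.sqrt ((#|` [fset phi a | a in A]|)%:R * (#|` [fset phi b | b in B]|)%:R)).
split.
  exists [fset phi a | a in A], [fset phi b | b in B]; split => //.
  - exact: (good_n0 g sAX nA).
  - exact: (good_n0 g sBX nB).
  - by rewrite (good_card g sAX) (good_card g sBX).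
rewrite (good_card g sAX) (good_card g sBX).
by apply: ratio_le; [exact: (good_sum3 g _ _)|exact: sqrtr_ge0].
Qed.

Lemma beta''_dir : dirP (@b''S R K1) (@b''S R K2).
Proof.
move=> r [A [nA ->]].
have [phi g] := hg A.
have sAX : A `<=` A by apply: fsubset_refl.
exists ((#|` sumset (sumset [fset phi a | a in A] [fset phi b | b in A]) U2|)%:R /
   (#|` [fset phi a | a in A]|)%:R).
split.
  exists [fset phi a | a in A]; split => //.
  exact: (good_n0 g sAX nA).
rewrite (good_card g sAX).
by apply: ratio_le; [exact: (good_sum3 g _ _)|exact: ler0n].
Qed.
End Dir.


Section Num.
Variable R : realType.
Lemma sqrt_nat_sq (t : nat) : Num.sqrt ((t%:R : R) * t%:R) = t%:R.
Proof. by rewrite -expr2 sqrtr_sqr ger0_norm. Qed.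

Lemma ge1_sqrt (a b c : nat) : (0 < a)%N -> (0 < b)%N -> (a <= c)%N -> (b <= c)%N ->
  1 <= (c%:R : R) / Num.sqrt (a%:R * b%:R).
Proof.
move=> a0 b0 ac bc.
have s0 : 0 < Num.sqrt ((a%:R : R) * b%:R).
  by rewrite sqrtr_gt0 -natrM ltr0n muln_gt0 a0.
rewrite ler_pdivlMr // mul1r -(sqrt_nat_sq c) ler_sqrt; last first.
  by rewrite -natrM ler0n.
by rewrite -!natrM ler_nat leq_mul.
Qed.

Lemma le1_sqrt (c t : nat) : (c <= t)%N -> (c%:R : R) / Num.sqrt (t%:R * t%:R) <= 1.
Proof.
move=> ct; rewrite sqrt_nat_sq.
case: t ct => [|t] ct.
  by rewrite leqn0 in ct; rewrite (eqP ct) mul0r ler01.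
by rewrite ler_pdivrMr ?ltr0n // mul1r ler_nat.
Qed.

Lemma ge1_div (a c : nat) : (0 < a)%N -> (a <= c)%N -> 1 <= (c%:R : R) / a%:R.
Proof. by move=> a0 ac; rewrite ler_pdivlMr ?ltr0n // mul1r ler_nat. Qed.

Lemma le1_div (c a : nat) : (c <= a)%N -> (c%:R : R) / a%:R <= 1.
Proof.
case: a => [|a] ca.
  by rewrite leqn0 in ca; rewrite (eqP ca) mul0r ler01.
by rewrite ler_pdivrMr ?ltr0n // mul1r ler_nat.
Qed.

Lemma ratio_ge0 (m : nat) (s : R) : 0 <= s -> 0 <= m%:R / s.
Proof. by move=> s0; rewrite divr_ge0. Qed.
End Num.

Section Card.
Variable K : zmodType.
Implicit Types A B : {fset K}.

Lemma card_sumset_l A B : B != fset0 -> (#|` A| <= #|` sumset A B|)%N.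
Proof.
case/fset0Pn => b bB.
have <- : #|` [fset a + b | a in A]| = #|` A|.
  by rewrite card_in_imfset // => x y _ _; apply: addIr.
apply: fsubset_leq_card; apply/fsubsetP => s /imfsetP [a /= aA ->].
exact: sumset_in.
Qed.

Lemma sumsetC A B : sumset A B = sumset B A.
Proof.
apply/fsetP => s; apply/sumsetP/sumsetP => [[a [b [aA bB ->]]]|[a [b [aA bB ->]]]];
  by exists b, a; rewrite addrC.
Qed.

Lemma card_sumset_r A B : A != fset0 -> (#|` B| <= #|` sumset A B|)%N.
Proof. by move=> nA; rewrite sumsetC card_sumset_l. Qed.

Lemma sumset0 A : sumset A fset0 = fset0.
Proof.
by apply/fsetP => s; rewrite inE; apply/sumsetP => [[a [b [_]]]]; rewrite inE.
Qed.

Lemma sumset_sub A B C : (forall a b, a \in A -> b \in B -> a + b \in C) ->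
  sumset A B `<=` C.
Proof. by move=> h; apply/fsubsetP => s /sumsetP [a [b [aA bB ->]]]; apply: h. Qed.
End Card.


Section NE.
Variables (R : realType) (K : zmodType) (U : {fset K}).
Let V := U `|` [fset (0 : K)].
Let nV : V != fset0. Proof. by apply/fset0Pn; exists 0; rewrite !inE eqxx orbT. Qed.
Let sV : U `<=` V. Proof. exact: fsubsetUl. Qed.
Let n0 : [fset (0:K)] != fset0. Proof. by apply/fset0Pn; exists 0; rewrite !inE. Qed.

Lemma aS_ne : exists x, @aS R K U x.
Proof. by eexists; exists V, V; split. Qed.
Lemma a'S_ne : exists x, @a'S R K U x.
Proof. by eexists; exists V, V; split; rewrite ?sV. Qed.
Lemma a''S_ne : exists x, @a''S R K U x.
Proof. by eexists; exists V; split. Qed.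
Lemma b'S_ne : exists x, @b'S R K U x.
Proof. by eexists; exists [fset 0], [fset 0]; split. Qed.
Lemma b''S_ne : exists x, @b''S R K U x.
Proof. by eexists; exists [fset 0]; split. Qed.

Lemma aS_ge0 x : @aS R K U x -> 0 <= x.
Proof. by move=> [A [B [_ _ _ _ ->]]]; apply: ratio_ge0; apply: sqrtr_ge0. Qed.
Lemma a'S_ge0 x : @a'S R K U x -> 0 <= x.
Proof. by move=> [A [B [_ _ _ _ ->]]]; apply: ratio_ge0; apply: ler0n. Qed.
Lemma a''S_ge0 x : @a''S R K U x -> 0 <= x.
Proof. by move=> [A [_ _ ->]]; apply: ratio_ge0; apply: ler0n. Qed.
Lemma b'S_ge0 x : @b'S R K U x -> 0 <= x.
Proof. by move=> [A [B [_ _ _ ->]]]; apply: ratio_ge0; apply: sqrtr_ge0. Qed.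
Lemma b''S_ge0 x : @b''S R K U x -> 0 <= x.
Proof. by move=> [A [_ ->]]; apply: ratio_ge0; apply: ler0n. Qed.
End NE.

Section Tor.
Variables (R : realType) (K1 K : zmodType) (U1 : {fset K1}) (U T : {fset K}).
Hypotheses (t0 : 0 \in T) (sUT : U `<=` T)
  (tT : forall x y, x \in T -> y \in T -> x + y \in T)
  (hU : (U1 == fset0) = (U == fset0)).

Let nT : T != fset0. Proof. by apply/fset0Pn; exists 0. Qed.
Let TT : (#|` sumset T T| <= #|` T|)%N.
Proof. by apply: fsubset_leq_card; apply: sumset_sub. Qed.
Let TTU : (#|` sumset (sumset T T) U| <= #|` T|)%N.
Proof.
apply: fsubset_leq_card; apply: sumset_sub => a b /sumsetP [x [y [xT yT ->]]] bU.
by apply: tT; [apply: tT|apply: (fsubsetP sUT)].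
Qed.

Lemma alpha_tor : dirP U1 U (@aS R K1) (@aS R K).
Proof.
move=> r [A [B [nA nB _ _ ->]]]; eexists; split.
  by exists T, T; split.
apply: le_trans (le1_sqrt _ TT) _.
by apply: ge1_sqrt; rewrite ?cardfs_gt0 ?card_sumset_l ?card_sumset_r.
Qed.

Lemma alpha'_tor : dirP U1 U (@a'S R K1) (@a'S R K).
Proof.
move=> r [A [B [nA nB _ _ ->]]]; eexists; split.
  by exists T, T; split; rewrite ?sUT.
apply: le_trans (le1_div _ TT) _.
by apply: ge1_div; rewrite ?cardfs_gt0 ?card_sumset_l.
Qed.

Lemma alpha''_tor : dirP U1 U (@a''S R K1) (@a''S R K).
Proof.
move=> r [A [nA _ ->]]; eexists; split.
  by exists T; split.
apply: le_trans (le1_div _ TT) _.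
by apply: ge1_div; rewrite ?cardfs_gt0 ?card_sumset_l.
Qed.

Lemma beta'_tor : dirP U1 U (@b'S R K1) (@b'S R K).
Proof.
move=> r [A [B [nA nB cAB ->]]]; eexists; split.
  by exists T, T; split.
have [U0|Un0] := eqVneq U fset0.
  rewrite U0 sumset0 cardfs0 mul0r; apply: ratio_ge0; exact: sqrtr_ge0.
apply: le_trans (le1_sqrt _ TTU) _.
have nU1 : U1 != fset0 by rewrite hU.
apply: ge1_sqrt; rewrite ?cardfs_gt0 //.
  apply: leq_trans (card_sumset_l _ nU1); exact: card_sumset_l.
rewrite -cAB; apply: leq_trans (card_sumset_l _ nU1); exact: card_sumset_l.
Qed.

Lemma beta''_tor : dirP U1 U (@b''S R K1) (@b''S R K).
Proof.
move=> r [A [nA ->]]; eexists; split.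
  by exists T; split.
have [U0|Un0] := eqVneq U fset0.
  rewrite U0 sumset0 cardfs0 mul0r; apply: ratio_ge0; exact: ler0n.
apply: le_trans (le1_div _ TTU) _.
have nU1 : U1 != fset0 by rewrite hU.
apply: ge1_div; rewrite ?cardfs_gt0 //.
apply: leq_trans (card_sumset_l _ nU1); exact: card_sumset_l.
Qed.
End Tor.

Lemma embed_good (G' H : zmodType) (U : {fset G'}) (X : {fset G'}) :
  good (fun g : G' => (g, (0 : H))) X U (embed H U).
Proof.
split => //.
- by move=> x y _ _ [].
- move=> x y z w _ _ _ _ e.
  by rewrite -[LHS]/(x + y, 0 + 0) -[RHS]/(z + w, 0 + 0) e.
- move=> x y z w u v _ _ _ _ _ _ e.
  by rewrite -[LHS]/(x + y + u, 0 + 0 + 0) -[RHS]/(z + w + v, 0 + 0 + 0) e.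
Qed.


Section Lin.
Variable H : zmodType.
Hypothesis hH : torsion_free H.

Definition lin (s : nat -> H) n (c : nat -> int) : H := \sum_(i < n) s i *~ c i.
Definition linZ (l : nat -> int) n (c : nat -> int) : int := \sum_(i < n) c i * l i.

Lemma linS s n c : lin s n.+1 c = lin s n c + s n *~ c n.
Proof. by rewrite /lin big_ord_recr. Qed.
Lemma linZS l n c : linZ l n.+1 c = linZ l n c + c n * l n.
Proof. by rewrite /linZ big_ord_recr. Qed.

Lemma tf_int (x : H) (m : int) : m != 0 -> x *~ m = 0 -> x = 0.
Proof.
case: m => [n|n] mn0 e.
  apply: (hH (n := n)); first by rewrite lt0n; move: mn0; apply: contra => /eqP ->.
  by rewrite -e -pmulrn.
apply: (hH (n := n.+1)) => //.
by move: e; rewrite NegzE mulrNz => /eqP; rewrite oppr_eq0 => /eqP.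
Qed.

Lemma lin_ext s n c c' : (forall i, (i < n)%N -> c i = c' i) -> lin s n c = lin s n c'.
Proof. by move=> h; apply: eq_bigr => i _; rewrite h. Qed.
Lemma linZ_ext l l' n c : (forall i, (i < n)%N -> l i = l' i) -> linZ l n c = linZ l' n c.
Proof. by move=> h; apply: eq_bigr => i _; rewrite h. Qed.

Lemma main_lin (s : nat -> H) n : forall k (P : nat -> nat -> int), exists l : nat -> int,
  (forall c, lin s n c = 0 -> linZ l n c = 0) /\
  (forall j, (j < k)%N -> lin s n (P j) != 0 -> linZ l n (P j) != 0).
Proof.
elim: n => [|n IH] k P.
  exists (fun=> 0); split => [c _|j _]; first by rewrite /linZ big_ord0.
  by rewrite /lin big_ord0 eqxx.
have [[c0 [c0n0 rel0]]|indep] :=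
  pselect (exists c0, c0 n != 0 /\ lin s n.+1 c0 = 0).
- pose m := c0 n.
  pose d (c : nat -> int) i := m * c i - c n * c0 i.
  have lind c : lin s n (d c) = (lin s n.+1 c) *~ m.
    rewrite [LHS]/lin (eq_bigr (fun i : 'I_n => s i *~ c i *~ m - s i *~ c0 i *~ c n)); last first.
      by move=> i _; rewrite mulrzBr -!mulrzA mulrC [c n * _]mulrC.
    rewrite sumrB -!mulrz_suml -/(lin s n c) -/(lin s n c0).
    have -> : lin s n c0 = - (s n *~ m) by apply/eqP; rewrite -addr_eq0 /m -linS rel0.
    by rewrite mulNrz opprK linS mulrzDl [s n *~ m *~ c n]mulrzAC.
  have [l [lrel lP]] := IH k (fun j => d (P j)).
  pose l' i := if (i < n)%N then m * l i else - linZ l n c0.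
  have linZd c : linZ l' n.+1 c = linZ l n (d c).
    rewrite linZS /l' ltnn.
    rewrite (@linZ_ext l' (fun i => m * l i)); last by move=> i ilt; rewrite /l' ilt.
    have e2 : linZ l n (d c) = m * linZ l n c - c n * linZ l n c0.
      rewrite /linZ /d !mulr_sumr -sumrB; apply: eq_bigr => i _.
      by rewrite mulrBl !mulrA.
    rewrite e2 mulrN; congr (_ + _).
    by rewrite /linZ mulr_sumr; apply: eq_bigr => i _; rewrite mulrCA.
  exists l'; split.
    by move=> c e; rewrite linZd; apply: lrel; rewrite lind e mul0rz.
  move=> j jk nz; rewrite linZd; apply: lP => //.
  rewrite lind; apply: contra nz => /eqP e; apply/eqP; exact: tf_int c0n0 e.
- have [l [lrel lP]] := IH k P.
  pose t : int := 1 + \sum_(j < k) `|linZ l n (P j)|.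
  pose l' i := if (i < n)%N then l i else t.
  have linZt c : linZ l' n.+1 c = linZ l n c + c n * t.
    by rewrite linZS /l' ltnn; congr (_ + _); apply: linZ_ext => i ilt; rewrite ilt.
  have t0 : 0 < t by rewrite ltr_pwDl // sumr_ge0.
  exists l'; split.
    move=> c e; rewrite linZt.
    have cn0 : c n = 0.
      apply/eqP; apply: contraT => cn; case: indep; by exists c.
    rewrite cn0 mul0r addr0; apply: lrel.
    by move: e; rewrite linS cn0 mulr0z addr0.
  move=> j jk nz; rewrite linZt.
  have [pn0|pn] := eqVneq (P j n) 0.
    rewrite pn0 mul0r addr0; apply: lP => //.
    by move: nz; rewrite linS pn0 mulr0z addr0.
  have alt : `|linZ l n (P j)| < t.
    rewrite /t ltr_pwDl // (bigD1 (Ordinal jk)) //= lerDl sumr_ge0 //.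
  apply/eqP => e.
  have : `|P j n * t| <= `|linZ l n (P j)|.
    by rewrite -normrN; move/eqP: e; rewrite addr_eq0 => /eqP ->.
  rewrite normrM (gtr0_norm t0) => h.
  have : t <= `|P j n| * t by rewrite ler_pMl // -gtz0_ge1 normr_gt0.
  move=> h2; have := le_lt_trans (le_trans h2 h) alt; by rewrite ltxx.
Qed.
End Lin.


Section Avoid.
Variables (G : zmodType) (g0 : G).
Hypothesis ng : forall n : nat, (0 < n)%N -> g0 *+ n != 0.

Lemma ginf (z : int) : z != 0 -> g0 *~ z != 0.
Proof.
case: z => [n|n] zn.
  by rewrite -pmulrn; apply: ng; rewrite lt0n; move: zn; apply: contra => /eqP ->.
by rewrite NegzE mulrNz oppr_eq0 -pmulrn; apply: ng.
Qed.

Lemma avoid (D : seq (int * G)) : (forall t, t \in D -> t.1 != 0) ->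
  exists N : nat, forall m : nat, (N <= m)%N -> forall t, t \in D -> g0 *~ (t.1 * m%:Z) != t.2.
Proof.
elim: D => [|t D IH] hD.
  by exists 0%N => m _ t; rewrite in_nil.
have [N hN] := IH (fun t' tD => hD t' (@mem_behead _ (t :: D) t' tD)).
have t1 : t.1 != 0 by apply: hD; rewrite mem_head.
have [[m0 e0]|ne] := pselect (exists m0 : nat, g0 *~ (t.1 * m0%:Z) = t.2).
- exists (maxn N m0.+1) => m; rewrite geq_max => /andP [Nm m0m] t'.
  rewrite in_cons => /orP [/eqP ->|t'D]; last exact: hN.
  apply/eqP => e.
  have : g0 *~ (t.1 * (m%:Z - m0%:Z)) = 0.
    by rewrite mulrBr mulrzBr e e0 subrr.
  apply/eqP; apply: ginf; rewrite mulf_neq0 // subr_eq0.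
  by apply/eqP => /eqP; rewrite eqz_nat => /eqP em; rewrite em ltnn in m0m.
- exists N => m Nm t'; rewrite in_cons => /orP [/eqP ->|t'D]; last exact: hN.
  by apply/eqP => e; apply: ne; exists m.
Qed.
End Avoid.

Section Delta.
Variable H : zmodType.
Definition dl (a : nat) (i : nat) : int := (i == a)%:R.

Lemma lin_dl (s : nat -> H) n a : (a < n)%N -> lin s n (dl a) = s a.
Proof.
move=> an; rewrite /lin (bigD1 (Ordinal an)) //= /dl eqxx mulr1z big1 ?addr0 //.
move=> i ia; have -> : (i == a :> nat) = false.
  by apply/negbTE; apply: contra ia => /eqP e; apply/eqP; apply: val_inj.
by rewrite ?mulr0z ?mul0r.
Qed.

Lemma linZ_dl (l : nat -> int) n a : (a < n)%N -> linZ l n (dl a) = l a.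
Proof.
move=> an; rewrite /linZ (bigD1 (Ordinal an)) //= /dl eqxx mul1r big1 ?addr0 //.
move=> i ia; have -> : (i == a :> nat) = false.
  by apply/negbTE; apply: contra ia => /eqP e; apply/eqP; apply: val_inj.
by rewrite ?mulr0z ?mul0r.
Qed.

Lemma linD (s : nat -> H) n c1 c2 : lin s n (fun i => c1 i + c2 i) = lin s n c1 + lin s n c2.
Proof. by rewrite /lin -big_split; apply: eq_bigr => i _; rewrite mulrzDr. Qed.
Lemma linN (s : nat -> H) n c : lin s n (fun i => - c i) = - lin s n c.
Proof. by rewrite /lin -sumrN; apply: eq_bigr => i _; rewrite mulrNz. Qed.
Lemma linZD l n c1 c2 : linZ l n (fun i => c1 i + c2 i) = linZ l n c1 + linZ l n c2.
Proof. by rewrite /linZ -big_split; apply: eq_bigr => i _; rewrite mulrDl. Qed.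
Lemma linZN l n c : linZ l n (fun i => - c i) = - linZ l n c.
Proof. by rewrite /linZ -sumrN; apply: eq_bigr => i _; rewrite mulNr. Qed.
End Delta.


Section NonTor.
Variables (G' H : zmodType) (hH : torsion_free H) (U : {fset G'}) (g0 : G').
Hypothesis ng : forall n : nat, (0 < n)%N -> g0 *+ n != 0.

Lemma freiman_F (Sq : seq H) : exists F : H -> int,
  (forall x y z w, x \in Sq -> y \in Sq -> z \in Sq -> w \in Sq ->
     x + y = z + w -> F x + F y = F z + F w) /\
  (forall x y, x \in Sq -> y \in Sq -> x != y -> F x != F y).
Proof.
pose n := size Sq; pose s i := nth 0 Sq i.
pose P (j : nat) := fun i => dl (j %/ n)%N i - dl (j %% n)%N i.
have [l [lrel lP]] := main_lin hH s n (n * n) P.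
exists (fun h => l (index h Sq)).
have sI h : h \in Sq -> s (index h Sq) = h by move=> hS; rewrite /s nth_index.
have iI h : h \in Sq -> (index h Sq < n)%N by move=> hS; rewrite index_mem.
split.
  move=> x y z w xS yS zS wS e.
  pose c := fun i => (dl (index x Sq) i + dl (index y Sq) i) +
     - (dl (index z Sq) i + dl (index w Sq) i).
  have := lrel c.
  rewrite /c linZD linZN !linZD !linZ_dl ?iI // linD linN !linD !lin_dl ?iI //.
  rewrite !sI // e subrr => /(_ erefl) /eqP; by rewrite subr_eq0 => /eqP.
move=> x y xS yS xy.
pose j := (index x Sq * n + index y Sq)%N.
have n0 : (0 < n)%N by apply: leq_ltn_trans (iI _ xS).
have jdiv : (j %/ n = index x Sq)%N by rewrite /j divnMDl // divn_small ?iI // addn0.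
have jmod : (j %% n = index y Sq)%N by rewrite /j modnMDl modn_small ?iI.
have jk : (j < n * n)%N.
  rewrite /j; apply: (@leq_trans ((index x Sq).+1 * n)); last by rewrite leq_mul2r iI ?orbT.
  by rewrite mulSn addnC ltn_add2r iI.
have := lP j jk; rewrite /P jdiv jmod.
rewrite linZD linZN linD linN !linZ_dl ?iI // !lin_dl ?iI // !sI // => h.
by rewrite -subr_eq0; apply: h; rewrite subr_eq0.
Qed.

Lemma nontor_good (X : {fset G' * H}) : exists phi, good phi X (embed H U) U.
Proof.
pose Sq := [seq x.2 | x <- enum_fset X].
have [F [FF Fi]] := freiman_F Sq.
have XS x : x \in X -> x.2 \in Sq by move=> xX; apply: map_f.
pose D0 := [seq (F q.2 - F p.2, p.1 - q.1) | p <- enum_fset X, q <- enum_fset X].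
pose D := [seq t <- D0 | t.1 != 0].
have hD : forall t, t \in D -> t.1 != 0 by move=> t; rewrite mem_filter => /andP [].
have [N hN] := avoid ng hD.
pose M : int := N%:Z.
pose phi (x : G' * H) := x.1 + g0 *~ ((F x.2 - F 0) * M).
have phi2 x y : phi x + phi y = (x.1 + y.1) + g0 *~ (((F x.2 - F 0) + (F y.2 - F 0)) * M).
  by rewrite /phi addrACA -mulrzDr -mulrDl.
have phiU u : u \in embed H U -> phi u = u.1 /\ u.1 \in U /\ u.2 = 0.
  case/imfsetP => u0 /= u0U ->; rewrite /phi /= subrr mul0r mulr0z addr0.
  by split.
exists phi; split.
- move=> [p1 p2] [q1 q2] pX qX e.
  have [e2|ne] := eqVneq p2 q2.
    move: e; rewrite /phi /= e2 => /addIr ->; by [].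
  have tD : (F q2 - F p2, p1 - q1) \in D.
    rewrite mem_filter /= subr_eq0 eq_sym Fi ?(XS _ pX) ?(XS _ qX) //=.
    by apply/allpairsP; exists ((p1, p2), (q1, q2)).
  have := hN N (leqnn N) _ tD; rewrite /=.
  suff -> : p1 - q1 = g0 *~ ((F q2 - F p2) * M) by rewrite eqxx.
  have -> : (F q2 - F p2) * M = (F q2 - F 0) * M - (F p2 - F 0) * M.
    by rewrite -mulrBl opprB addrA subrK.
  rewrite mulrzBr; move: e; rewrite /phi /= => e.
  set a := g0 *~ ((F p2 - F 0) * M) in e *; set b := g0 *~ ((F q2 - F 0) * M) in e *.
  by rewrite -[p1](addrK a) e [_ - a - q1]addrAC [q1 + _ - q1]addrAC subrr add0r.
- move=> x y z w xX yX zX wX e.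
  rewrite !phi2; congr (_ + _); first by move/(congr1 fst): e.
  congr (g0 *~ (_ * _)).
  rewrite addrACA [RHS]addrACA; congr (_ + _).
  by apply: FF; rewrite ?XS //; move/(congr1 snd): e.
- move=> x y z w u v xX yX zX wX uU vU e.
  have [pu [_ u2]] := phiU u uU; have [pv [_ v2]] := phiU v vU.
  rewrite !phi2 pu pv addrAC [RHS]addrAC; congr (_ + _).
    by move/(congr1 fst): e => /= e; rewrite -e.
  congr (g0 *~ (_ * _)).
  rewrite addrACA [RHS]addrACA; congr (_ + _).
  apply: FF; rewrite ?XS //; move/(congr1 snd): e => /=.
  by rewrite u2 v2 !addr0.
- apply/fsetP => t; apply/imfsetP/idP => [[u uU ->]|tU].
    by have [-> [? _]] := phiU u uU.
  exists (t, 0); first by apply/imfsetP; exists t.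
  by rewrite /phi /= subrr mul0r mulr0z addr0.
Qed.
End NonTor.


Section Tor.
Variable G : zmodType.
Hypothesis tor : forall g : G, exists n, (0 < n)%N /\ g *+ n = 0.

Lemma common_order (s : seq G) : exists N', forall u, u \in s -> u *+ N'.+1 = 0.
Proof.
elim: s => [|u s [N' IH]]; first by exists 0%N.
have [nu [nu0 enu]] := tor u.
exists (nu * N'.+1).-1; rewrite prednK ?muln_gt0 ?nu0 // => v.
rewrite in_cons => /orP [/eqP ->|vs]; first by rewrite mulrnA enu mul0rn.
by rewrite mulnC mulrnA IH // mul0rn.
Qed.

Lemma mulrn_mod (u : G) N m : u *+ N = 0 -> u *+ (m %% N) = u *+ m.
Proof.
move=> uN; rewrite {2}(divn_eq m N) mulrnDr [(_ * N)%N]mulnC mulrnA uN mul0rn add0r.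
by [].
Qed.

Lemma tor_T (U : {fset G}) :
  exists T : {fset G}, [/\ 0 \in T, U `<=` T &
    forall x y, x \in T -> y \in T -> x + y \in T].
Proof.
pose us := enum_fset U; pose k := size us.
have [N' hN] := common_order us.
pose N := N'.+1.
pose sumf (f : {ffun 'I_k -> 'I_N}) := \sum_(i < k) us`_i *+ f i.
have usN (i : nat) m : (i < k)%N -> us`_i *+ (m %% N) = us`_i *+ m.
  by move=> ik; apply: mulrn_mod; apply: hN; apply: mem_nth.
exists [fset sumf f | f in enum {ffun 'I_k -> 'I_N}]; split.
- apply/imfsetP; exists [ffun=> inZp 0%N]; first by rewrite mem_enum.
  by rewrite /sumf big1 // => i _; rewrite ffunE /= mod0n.
- apply/fsubsetP => u uU; apply/imfsetP.
  have ak : (index u us < k)%N by rewrite index_mem.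
  exists [ffun i : 'I_k => inZp (i == Ordinal ak)]; first by rewrite mem_enum.
  rewrite /sumf (bigD1 (Ordinal ak)) //= big1 ?addr0.
    by rewrite ffunE /= (usN _ _ ak) eqxx mulr1n nth_index.
  by move=> i ia; rewrite ffunE /= (usN _ _ (ltn_ord i)) (negbTE ia) mulr0n.
- move=> x y /imfsetP [f _ ->] /imfsetP [g _ ->]; apply/imfsetP.
  exists [ffun i => inZp (f i + g i)]; first by rewrite mem_enum.
  rewrite /sumf -big_split; apply: eq_bigr => i _.
  by rewrite ffunE /= (usN _ _ (ltn_ord i)) mulrnDr.
Qed.
End Tor.


Theorem mainTheorem17 (R : realType) (G' H : zmodType)
    (hH : torsion_free H) (U : {fset G'}) :
  [/\ alpha R (embed H U) = alpha R U,
      alpha' R (embed H U) = alpha' R U,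
      alpha'' R (embed H U) = alpha'' R U,
      beta' R (embed H U) = beta' R U &
      beta'' R (embed H U) = beta'' R U].
Proof.
have he : forall X : {fset G'}, exists phi, good phi X U (embed H U).
  by move=> X; exists (fun g : G' => (g, (0 : H))); apply: embed_good.
have key : [/\ dirP (embed H U) U (@aS R _) (@aS R _),
  dirP (embed H U) U (@a'S R _) (@a'S R _),
  dirP (embed H U) U (@a''S R _) (@a''S R _),
  dirP (embed H U) U (@b'S R _) (@b'S R _) &
  dirP (embed H U) U (@b''S R _) (@b''S R _)].
  have [[g0 ng]|nt] := pselect (exists g0 : G', forall n : nat, (0 < n)%N -> g0 *+ n != 0).
    have hr : forall X, exists phi, good phi X (embed H U) U.
      by move=> X; exact: (@nontor_good G' H hH U g0 ng X).
    split; [exact: alpha_dir hr|exact: alpha'_dir hr|exact: alpha''_dir hr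
           |exact: beta'_dir hr|exact: beta''_dir hr].
  have tor : forall g : G', exists n, (0 < n)%N /\ g *+ n = 0.
    move=> g; apply: contrapT => hn; apply: nt; exists g => n n0.
    by apply/eqP => e; apply: hn; exists n.
  have [T [t0 sUT tT]] := tor_T tor U.
  have hU : (embed H U == fset0) = (U == fset0).
    rewrite -!cardfs_eq0 /embed card_in_imfset //.
    by move=> x y _ _ [].
  split; [exact: alpha_tor t0 sUT tT|exact: alpha'_tor t0 sUT tT
         |exact: alpha''_tor t0 sUT tT
         |exact: beta'_tor t0 sUT tT hU|exact: beta''_tor t0 sUT tT hU].
case: key => k1 k2 k3 k4 k5.
split.
- rewrite !alphaE; apply: inf_transfer; [exact: aS_ne|exact: aS_ne|exact: aS_ge0
    |exact: aS_ge0|exact: k1|exact: alpha_dir he].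
- rewrite !alpha'E; apply: inf_transfer; [exact: a'S_ne|exact: a'S_ne|exact: a'S_ge0
    |exact: a'S_ge0|exact: k2|exact: alpha'_dir he].
- rewrite !alpha''E; apply: inf_transfer; [exact: a''S_ne|exact: a''S_ne|exact: a''S_ge0
    |exact: a''S_ge0|exact: k3|exact: alpha''_dir he].
- rewrite !beta'E; apply: inf_transfer; [exact: b'S_ne|exact: b'S_ne|exact: b'S_ge0
    |exact: b'S_ge0|exact: k4|exact: beta'_dir he].
- rewrite !beta''E; apply: inf_transfer; [exact: b''S_ne|exact: b''S_ne|exact: b''S_ge0
    |exact: b''S_ge0|exact: k5|exact: beta''_dir he].
Qed.
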